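(* Let $\Theta$ be a non-empty finite set, let $\mathcal{S}$ be a measurable subset of $\Delta(\Theta)$, and fix an interview cost $c>0$. For two populations $\pi,\pi'\in\Delta(\mathcal{S})$ with $p_\pi=p_{\pi'}$, $\pi' \mathrel{M} \pi$ holds if and only if either (i) there is systematic ex-ante discrimination against $\pi$, or (ii) there is no ex-ante discrimination.
   Context: $\Delta(\Theta)$ denotes the set of probability distributions on $\Theta$ (with its Borel $\sigma$-algebra). A population is a probability measure $\pi\in\Delta(\mathcal{S})$; its skill distribution is $p_\pi(\theta)=\int_{\mathcal{S}} s(\theta)\,\pi(\mathrm{d}s)$ for $\theta\in\Theta$. For a non-empty finite $A\subset\mathbb{R}^\Theta$, $v_A(s)=\max_{a\in A}\sum_{\theta\in\Theta}a(\theta)s(\theta)$. A firm is a pair $(A,\alpha)$ with $A$ a non-empty finite subset of $\mathbb{R}^\Theta$ and $0<\alpha\le 1$. Firm $(A,\alpha)$ excludes population $\pi$ if $\alpha\int_{\mathcal{S}}\max\{v_A,0\}\,\mathrm{d}\pi\le c$. For $\pi,\pi'$ with $p_\pi=p_{\pi'}$: there is systematic ex-ante discrimination against $\pi$ if every firm that excludes $\pi'$ also excludes $\pi$, and some firm excludes $\pi$ but not $\pi'$. There is unsystematic ex-ante discrimination if there is a firm that excludes $\pi$ but not $\pi'$ and a firm that excludes $\pi'$ but not $\pi$. There is no ex-ante discrimination if there is neither systematic ex-ante discrimination (against $\pi$ or against $\pi'$) nor unsystematic ex-ante discrimination. $\pi' \mathrel{M} \pi$ means $\int_{\mathcal{S}}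 h\,\mathrm{d}\pi'\ge\int_{\mathcal{S}} h\,\mathrm{d}\pi$ for every convex continuous $h:\Delta(\Theta)\to\mathbb{R}$. *)

(* Defs.v *)
From HB Require Import structures.
From mathcomp Require Import all_boot all_order all_algebra.
From mathcomp Require Import all_classical all_reals all_analysis.
Set Implicit Arguments. Unset Strict Implicit. Unset Printing Implicit Defensive.
Import Order.TTheory GRing.Theory Num.Theory.
Import numFieldNormedType.Exports.
Local Open Scope classical_set_scope.
Local Open Scope ring_scope.

(* Theta is represented as the index type 'I_n (n > 0 imposed in the theorem);
   R^Theta is 'rV[R]_n, a skill distribution s is a row vector s with
   s 0 i = s(theta_i). *)

Definition Delta (R : realType) (n : nat) : set 'rV[R]_n :=
  [set s | (forall i, 0 <= s 0 i) /\ \sum_(i < n) s 0 i = 1].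
Arguments Delta : clear implicits.

Notation Borel R n := (g_sigma_algebraType (@open 'rV[R]_n)).

Definition dotp (R : realType) (n : nat) (a s : 'rV[R]_n) : R :=
  \sum_(i < n) a 0 i * s 0 i.

(* v_A(s) = max_{a in A} <a, s>; A is a non-empty finite list. *)
Definition vA (R : realType) (n : nat) (A : seq 'rV[R]_n) (s : 'rV[R]_n) : R :=
  \big[Num.max/dotp (head 0 A) s]_(a <- A) dotp a s.

Definition firm (R : realType) (n : nat) (A : seq 'rV[R]_n) (alpha : R) : Prop :=
  A != [::] /\ 0 < alpha <= 1.

(* population pi (a probability measure on R^Theta concentrated on S) *)
Definition excludes (R : realType) (n : nat) (c : R) (S : set (Borel R n))
    (A : seq 'rV[R]_n) (alpha : R) (pi : probability (Borel R n) R) : Prop :=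
  (alpha%:E * \int[pi]_(s in S) (Num.max (vA A s) 0)%:E <= c%:E)%E.

Definition skill (R : realType) (n : nat) (S : set (Borel R n))
    (pi : probability (Borel R n) R) (i : 'I_n) : \bar R :=
  \int[pi]_(s in S) (s 0 i)%:E.

Definition systematic (R : realType) (n : nat) (c : R) (S : set (Borel R n))
    (pi pi' : probability (Borel R n) R) : Prop :=
  (forall A alpha, firm A alpha -> excludes c S A alpha pi' -> excludes c S A alpha pi)
  /\ (exists A alpha, firm A alpha /\ excludes c S A alpha pi
                                    /\ ~ excludes c S A alpha pi').

Definition unsystematic (R : realType) (n : nat) (c : R) (S : set (Borel R n))
    (pi pi' : probability (Borel R n) R) : Prop :=
  (exists A alpha, firm A alpha /\ excludes c S A alpha pi /\ ~ excludes c S A alpha pi')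
  /\ (exists A alpha, firm A alpha /\ excludes c S A alpha pi' /\ ~ excludes c S A alpha pi).

Definition no_discrimination (R : realType) (n : nat) (c : R) (S : set (Borel R n))
    (pi pi' : probability (Borel R n) R) : Prop :=
  ~ systematic c S pi pi' /\ ~ systematic c S pi' pi /\ ~ unsystematic c S pi pi'.

Definition Mrel (R : realType) (n : nat) (S : set (Borel R n))
    (pi' pi : probability (Borel R n) R) : Prop :=
  forall h : 'rV[R]_n -> R,
    convex_function (Delta R n) h ->
    {within Delta R n, continuous h} ->
    (\int[pi']_(s in S) (h s)%:E >= \int[pi]_(s in S) (h s)%:E)%E.

(* Main.v *)
Require Import Defs.
From HB Require Import structures.
From mathcomp Require Import all_boot all_order all_algebra.
From mathcomp Require Import finmap.
From mathcomp Require Import all_classical all_reals all_analysis.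
From mathcomp Require Import ring lra.
Import Order.TTheory GRing.Theory Num.Theory.
Import numFieldNormedType.Exports.
Local Open Scope classical_set_scope.
Local Open Scope ring_scope.
Set Implicit Arguments. Unset Strict Implicit. Unset Printing Implicit Defensive.
Definition ones (R : realType) (n : nat) : 'rV[R]_n := const_mx 1.

Lemma onesE (R : realType) n i : ones R n 0 i = 1.
Proof. by rewrite mxE. Qed.

Lemma dotpDr (R : realType) n (a x y : 'rV[R]_n) : dotp a (x + y) = dotp a x + dotp a y.
Proof. by rewrite /dotp -big_split; apply: eq_bigr => i _; rewrite mxE mulrDr. Qed.

Lemma dotpZr (R : realType) n (a x : 'rV[R]_n) k : dotp a (k *: x) = k * dotp a x.
Proof. by rewrite /dotp mulr_sumr; apply: eq_bigr => i _; rewrite mxE mulrCA. Qed.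

Lemma dotpDl (R : realType) n (a b x : 'rV[R]_n) : dotp (a + b) x = dotp a x + dotp b x.
Proof. by rewrite /dotp -big_split; apply: eq_bigr => i _; rewrite mxE mulrDl. Qed.

Lemma dotpZl (R : realType) n (a x : 'rV[R]_n) k : dotp (k *: a) x = k * dotp a x.
Proof. by rewrite /dotp mulr_sumr; apply: eq_bigr => i _; rewrite mxE mulrA. Qed.

Lemma dotpNr (R : realType) n (a x : 'rV[R]_n) : dotp a (- x) = - dotp a x.
Proof. by rewrite -scaleN1r dotpZr mulN1r. Qed.

Lemma dotpBr (R : realType) n (a x y : 'rV[R]_n) : dotp a (x - y) = dotp a x - dotp a y.
Proof. by rewrite dotpDr dotpNr. Qed.

Lemma dotp0l (R : realType) n (x : 'rV[R]_n) : dotp 0 x = 0.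
Proof. by rewrite /dotp big1 // => i _; rewrite mxE mul0r. Qed.

Lemma dotp_ones (R : realType) n (x : 'rV[R]_n) : x \in Delta R n -> dotp (ones R n) x = 1.
Proof.
rewrite inE => -[_ <-]; rewrite /dotp; apply: eq_bigr => i _.
by rewrite mxE mul1r.
Qed.

Lemma vA_ge (R : realType) n (A : seq 'rV[R]_n) a s : a \in A -> dotp a s <= vA A s.
Proof.
rewrite /vA; move: (dotp (head 0 A) s) => x0.
elim: A => // b A IH; rewrite inE big_cons => /orP [/eqP->|/IH H].
  by rewrite le_max lexx.
by rewrite le_max H orbT.
Qed.

Lemma vA_le (R : realType) n (A : seq 'rV[R]_n) s m : A != [::] ->
  (forall a, a \in A -> dotp a s <= m) -> vA A s <= m.
Proof.
case: A => [//|a0 A] _ H; rewrite /vA big_seq; apply: bigmax_le => [|i iA].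
  by apply: H; rewrite mem_head.
exact: H.
Qed.

Definition nrm1 (R : realType) n (a : 'rV[R]_n) : R := \sum_i `|a 0 i|.

Lemma nrm1_ge0 (R : realType) n (a : 'rV[R]_n) : 0 <= nrm1 a.
Proof. by apply: sumr_ge0 => i _. Qed.

Lemma entry_le_norm (R : realType) n (x : 'rV[R]_n) i : `|x 0 i| <= `|x|.
Proof.
have /mapP[j Hj ->] : `|x 0 i| \in [seq `|x k.1 k.2| | k : 'I_1 * 'I_n].
  by apply/mapP; exists (0, i) => //=; rewrite mem_enum.
have -> : `|x| = mx_norm x by [].
by rewrite mx_normrE; apply/bigmax_geP; right => /=; exists j.
Qed.

Lemma dotp_lip (R : realType) n (a x : 'rV[R]_n) : `|dotp a x| <= nrm1 a * `|x|.
Proof.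
rewrite /dotp /nrm1 mulr_suml; apply: (le_trans (ler_norm_sum _ _ _)).
apply: ler_sum => i _; rewrite normrM ler_wpM2l //; exact: entry_le_norm.
Qed.

Lemma dotp_bnd (R : realType) n (a x : 'rV[R]_n) : x \in Delta R n -> `|dotp a x| <= nrm1 a.
Proof.
rewrite inE => -[x0 x1].
rewrite /dotp /nrm1; apply: (le_trans (ler_norm_sum _ _ _)).
apply: ler_sum => i _; rewrite normrM -[leRHS]mulr1 ler_wpM2l //.
rewrite ger0_norm // -x1 (bigD1 i) //= lerDl; exact: sumr_ge0.
Qed.

Lemma vA_conv (R : realType) n (A : seq 'rV[R]_n) (x y : 'rV[R]_n) (t : R) :
  A != [::] -> 0 <= t <= 1 ->
  vA A (t *: x + (1 - t) *: y) <= t * vA A x + (1 - t) * vA A y.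
Proof.
move=> A0 /andP[t0 t1]; apply: vA_le => // a aA.
rewrite dotpDr !dotpZr; apply: lerD; apply: ler_wpM2l; rewrite ?subr_ge0 //;
exact: vA_ge.
Qed.

Lemma vA_scale (R : realType) n (A : seq 'rV[R]_n) (k : R) s : A != [::] -> 0 < k ->
  vA (map (fun a => k *: a) A) s = k * vA A s.
Proof.
move=> A0 k0; have mA0 : map (fun a => k *: a) A != [::] by case: A A0.
apply/eqP; rewrite eq_le; apply/andP; split.
  apply: vA_le => // b /mapP[a aA ->]; rewrite dotpZl ler_pM2l //.
  exact: vA_ge.
have H : vA A s <= k^-1 * vA (map (fun a => k *: a) A) s.
  apply: vA_le => // a aA.
  have h : dotp (k *: a) s <= vA (map (fun a => k *: a) A) s.
    by apply: vA_ge; apply: (map_f (fun a => k *: a) aA).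
  rewrite dotpZl in h; rewrite ler_pdivlMl //.
have := ler_wpM2l (ltW k0) H; rewrite mulrA mulfV ?mul1r //; exact: lt0r_neq0.
Qed.

Lemma vA_shift (R : realType) n (A : seq 'rV[R]_n) (K : R) s : A != [::] ->
  vA (map (fun a => a + K *: ones R n) A) s = vA A s + K * dotp (ones R n) s.
Proof.
move=> A0; have mA0 : map (fun a => a + K *: ones R n) A != [::] by case: A A0.
apply/eqP; rewrite eq_le; apply/andP; split.
  apply: vA_le => // b /mapP[a aA ->]; rewrite dotpDl dotpZl lerD2r.
  exact: vA_ge.
rewrite -lerBrDr; apply: vA_le => // a aA; rewrite lerBrDr.
have -> : dotp a s + K * dotp (ones R n) s = dotp (a + K *: ones R n) s.
  by rewrite dotpDl dotpZl.
apply: vA_ge; exact: map_f.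
Qed.

Lemma vA_cons0 (R : realType) n (A : seq 'rV[R]_n) s : A != [::] ->
  Num.max (vA A s) 0 = vA (0 :: A) s.
Proof.
move=> A0; apply/eqP; rewrite eq_le; apply/andP; split.
  rewrite ge_max; apply/andP; split.
    by apply: vA_le => // a aA; apply: vA_ge; rewrite inE aA orbT.
  by rewrite -(dotp0l s); apply: vA_ge; rewrite mem_head.
apply: vA_le => // a; rewrite inE => /orP[/eqP->|aA].
  by rewrite dotp0l le_max lexx orbT.
by rewrite le_max (vA_ge s aA).
Qed.

Definition Cst (R : realType) n (A : seq 'rV[R]_n) : R := \sum_(a <- A) nrm1 a.

Lemma Cst_ge (R : realType) n (A : seq 'rV[R]_n) a : a \in A -> nrm1 a <= Cst A.
Proof.
rewrite /Cst; elim: A => // b A IH; rewrite inE big_cons => /orP[/eqP->|/IH H].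
  by rewrite lerDl; apply: sumr_ge0 => *; exact: nrm1_ge0.
by rewrite (le_trans H) // lerDr nrm1_ge0.
Qed.

Lemma vA_lip (R : realType) n (A : seq 'rV[R]_n) s t : A != [::] ->
  `|vA A s - vA A t| <= Cst A * `|s - t|.
Proof.
move=> A0.
have H : forall u v, vA A u - vA A v <= Cst A * `|u - v|.
  move=> u v; rewrite lerBlDr; apply: vA_le => // a aA.
  have : dotp a u - dotp a v <= Cst A * `|u - v|.
    rewrite -dotpBr; apply: (le_trans (ler_norm _)); apply: (le_trans (dotp_lip _ _)).
    by rewrite ler_wpM2r // Cst_ge.
  have := vA_ge v aA; lra.
rewrite ler_norml H andbT; have := H t s; rewrite distrC; lra.
Qed.

Lemma vA_bnd (R : realType) n (A : seq 'rV[R]_n) s : A != [::] -> s \in Delta R n ->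
  `|vA A s| <= Cst A.
Proof.
move=> A0 sD; rewrite ler_norml; apply/andP; split.
  case: A A0 => [//|a A] _.
  have h1 := vA_ge s (mem_head a A); have := dotp_bnd a sD; rewrite ler_norml => /andP[h2 _].
  have := Cst_ge (mem_head a A); lra.
apply: vA_le => // a aA; have := dotp_bnd a sD; rewrite ler_norml => /andP[_ h2].
have := Cst_ge aA; lra.
Qed.

Lemma lip_cont (R : realType) n (f : 'rV[R]_n -> R) C : 0 <= C ->
  (forall s t, `|f s - f t| <= C * `|s - t|) -> continuous f.
Proof.
move=> C0 H x; apply/(@cvgrPdist_lt _ _ _ (nbhs x) (nbhs_filter x)) => e e0.
have d0 : 0 < e / (C + 1) by apply: divr_gt0 => //; lra.
have := @cvgr_dist_lt _ _ _ (nbhs x) (nbhs_filter x) id x cvg_id _ d0.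
apply: filterS => y /= xy.
apply: (le_lt_trans (H x y)).
have C1 : 0 < C + 1 by lra.
have : C * `|x - y| <= C * (e / (C + 1)) by rewrite ler_wpM2l // ltW.
have : C * (e / (C + 1)) < e.
  by rewrite mulrA ltr_pdivrMr //; nra.
lra.
Qed.

Lemma dotp_cont (R : realType) n (a : 'rV[R]_n) : continuous (dotp a).
Proof.
apply: (@lip_cont _ _ _ (nrm1 a)); first exact: nrm1_ge0.
by move=> s t; rewrite -dotpBr dotp_lip.
Qed.

Lemma vA_cont (R : realType) n (A : seq 'rV[R]_n) : A != [::] -> continuous (vA A).
Proof.
move=> A0; apply: (@lip_cont _ _ _ (Cst A)).
  by apply: sumr_ge0 => *; exact: nrm1_ge0.
by move=> s t; apply: vA_lip.
Qed.

Lemma Delta_convex (R : realType) n (x y : 'rV[R]_n) (t : R) :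
  x \in Delta R n -> y \in Delta R n -> 0 <= t <= 1 -> t *: x + (1 - t) *: y \in Delta R n.
Proof.
rewrite !inE => -[x0 x1] [y0 y1] /andP[t0 t1]; split.
  move=> i; rewrite !mxE; apply: addr_ge0; apply: mulr_ge0 => //; lra.
rewrite (eq_bigr (fun i => t * x 0 i + (1 - t) * y 0 i)); last by move=> i _; rewrite !mxE.
by rewrite big_split /= -!mulr_sumr x1 y1; lra.
Qed.

Lemma Delta_closed (R : realType) n : closed (Delta R n).
Proof.
have -> : Delta R n = \bigcap_(i in [set: 'I_n]) (dotp (delta_mx 0 i) @^-1` [set x | 0 <= x])
   `&` (dotp (ones R n) @^-1` [set 1]).
  apply/seteqP; split => x.
    case=> x0 x1; split.
      move=> i _ /=; rewrite /dotp (bigD1 i) //= big1 ?addr0.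
        by rewrite mxE !eqxx mul1r.
      by move=> j ji; rewrite mxE (negPf ji) andbF mul0r.
    by rewrite /= -x1 /dotp; apply: eq_bigr => i _; rewrite mxE mul1r.
  case=> H1 H2; split.
    move=> i; have := H1 i I; rewrite /= /dotp (bigD1 i) //= big1 ?addr0.
      by rewrite mxE !eqxx mul1r.
    by move=> j ji; rewrite mxE (negPf ji) andbF mul0r.
  by rewrite -H2 /dotp; apply: eq_bigr => i _; rewrite mxE mul1r.
apply: closedI.
  apply: closed_bigI => i _; apply: preimage_closed; first by move=> x _; exact: dotp_cont.
  exact: closed_ge.
apply: preimage_closed; first by move=> x _; exact: dotp_cont.
have -> : [set (1 : R)] = [set x | x = 1] by [].
exact: closed_eq.
Qed.

Lemma Delta_norm (R : realType) n (x : 'rV[R]_n) : x \in Delta R n -> `|x| <= 1.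
Proof.
rewrite inE => -[x0 x1].
have -> : `|x| = mx_norm x by [].
rewrite mx_normrE; apply: bigmax_le => // -[i j] _ /=.
rewrite (ord1 i) ger0_norm // -x1 (bigD1 j) //= lerDl; exact: sumr_ge0.
Qed.

Lemma Delta_compact (R : realType) n : compact (Delta R n).
Proof.
apply: bounded_closed_compact; last exact: Delta_closed.
exists 1; split; first by rewrite num_real.
move=> M M1 x xD; apply: (le_trans (Delta_norm _)); [by rewrite inE | exact: ltW].
Qed.

Lemma MC (R : realType) n (S : set (Borel R n)) (mS : measurable S)
  (SD : S `<=` Delta R n) (f : 'rV[R]_n -> R) :
  {within Delta R n, continuous f} -> measurable_fun S (f : Borel R n -> R).
Proof.
move=> /continuousP cf; apply: (measurability _ (measurable_realfun.RGenOpens.measurableE R)).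
move=> _ [_ [a [b ->]] <-].
have : open (from_subspace (Delta R n) f @^-1` `]a, b[%classic) by apply/cf/interval_open.
move=> /open_subspaceP [V oV VD].
have -> : S `&` f @^-1` `]a, b[%classic = S `&` V.
  apply/seteqP; split => x [Sx Hx]; split => //.
    have : (f @^-1` `]a, b[%classic `&` Delta R n) x by split => //; exact: SD.
    by rewrite -VD => -[].
  have : (V `&` Delta R n) x by split => //; exact: SD.
  by rewrite VD => -[].
apply: measurableI => //; exact: sub_sigma_algebra.
Qed.

Lemma conv_use (R : realType) n (h : 'rV[R]_n -> R) :
  convex_function (Delta R n) h -> forall x y (t : R),
  x \in Delta R n -> y \in Delta R n -> 0 <= t -> t <= 1 ->
  h (t *: x + (1 - t) *: y) <= t * h x + (1 - t) * h y.
Proof.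
move=> hc x y t xD yD t0 t1.
exact: (hc (Itv01 t0 t1) x y xD yD).
Qed.

Definition pp (R : realType) n (y t : 'rV[R]_n) : 'rV[R]_n :=
  y + t - (dotp (ones R n) t) *: y.

Lemma pp_aff (R : realType) n (y t1 t2 : 'rV[R]_n) (l : R) :
  pp y (l *: t1 + (1 - l) *: t2) = l *: pp y t1 + (1 - l) *: pp y t2.
Proof.
rewrite /pp dotpDr !dotpZr; apply/rowP => i; rewrite !mxE; ring.
Qed.

Lemma pp_sum (R : realType) n (y t : 'rV[R]_n) : y \in Delta R n ->
  dotp (ones R n) (pp y t) = 1.
Proof.
move=> yD; rewrite /pp dotpBr dotpDr dotpZr dotp_ones //; ring.
Qed.

Lemma pp_Delta (R : realType) n (y t : 'rV[R]_n) : y \in Delta R n ->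
  (forall i, 0 <= pp y t 0 i) -> pp y t \in Delta R n.
Proof.
move=> yD H; rewrite inE; split => //.
have := pp_sum t yD; rewrite /dotp => <-; apply: eq_bigr => i _.
by rewrite onesE mul1r.
Qed.

Lemma dotp0r (R : realType) n (a : 'rV[R]_n) : dotp a 0 = 0.
Proof. by rewrite /dotp big1 // => i _; rewrite mxE mulr0. Qed.

Lemma dotp_deltar (R : realType) n (a : 'rV[R]_n) i : dotp a (delta_mx 0 i) = a 0 i.
Proof.
rewrite /dotp (bigD1 i) //= big1 ?addr0.
  by rewrite mxE !eqxx mulr1.
by move=> j ji; rewrite mxE (negPf ji) andbF mulr0.
Qed.

Lemma dotp_deltal (R : realType) n (a : 'rV[R]_n) i : dotp (delta_mx 0 i) a = a 0 i.
Proof.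
rewrite /dotp (bigD1 i) //= big1 ?addr0.
  by rewrite mxE !eqxx mul1r.
by move=> j ji; rewrite mxE (negPf ji) andbF mul0r.
Qed.

Lemma subgrad_ind (R : realType) n (h : 'rV[R]_n -> R)
  (hc : convex_function (Delta R n) h) (y : 'rV[R]_n) (yD : y \in Delta R n)
  (ypos : forall i, 0 < y 0 i) (k : nat) : (k <= n)%N ->
  exists a : 'rV[R]_n, forall t : 'rV[R]_n,
    (forall j : 'I_n, (k <= j)%N -> t 0 j = 0) ->
    pp y t \in Delta R n -> h y + dotp a t <= h (pp y t).
Proof.
elim: k => [_|k IH kn].
  exists 0 => t t0 _.
  have -> : t = 0 by apply/rowP => j; rewrite mxE; exact: t0.
  by rewrite dotp0l /pp dotp0r scale0r !addr0 subr0.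
have [a Ha] := IH (ltnW kn).
pose kk : 'I_n := Ordinal kn.
pose e : 'rV[R]_n := delta_mx 0 kk.
have ek : e 0 kk = 1 by rewrite mxE !eqxx.
have ej : forall j, j != kk -> e 0 j = 0 by move=> j jk; rewrite mxE (negPf jk) andbF.
have dae : forall b, dotp b e = b 0 kk by move=> b; exact: dotp_deltar.
have dea : forall b, dotp e b = b 0 kk by move=> b; exact: dotp_deltal.
clearbody e.
pose supp (t : 'rV[R]_n) := forall j : 'I_n, (k <= j)%N -> t 0 j = 0.
pose q t s := (h (pp y (t + s *: e)) - (h y + dotp a t)) / s.
have Key : forall t1 s1 t2 s2, supp t1 -> supp t2 -> s1 < 0 -> 0 < s2 ->
    pp y (t1 + s1 *: e) \in Delta R n -> pp y (t2 + s2 *: e) \in Delta R n ->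
    q t1 s1 <= q t2 s2.
  move=> t1 s1 t2 s2 st1 st2 s10 s20 D1 D2.
  have d0 : s2 - s1 != 0 by apply: lt0r_neq0; lra.
  have dp : 0 < s2 - s1 by lra.
  pose l := s2 / (s2 - s1).
  have l0 : 0 <= l by apply: divr_ge0; lra.
  have l1 : l <= 1 by rewrite ler_pdivrMr //; lra.
  pose tm := l *: t1 + (1 - l) *: t2.
  have stm : supp tm by move=> j kj; rewrite !mxE st1 // st2 //; ring.
  have ls : l * s1 + (1 - l) * s2 = 0 by rewrite /l; field.
  have eq : l *: (t1 + s1 *: e) + (1 - l) *: (t2 + s2 *: e) = tm.
    apply/rowP => i; rewrite !mxE.
    transitivity (l * t1 0 i + (1 - l) * t2 0 i + (l * s1 + (1 - l) * s2) * e 0 i).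
      ring.
    by rewrite ls mul0r addr0.
  have Dm : pp y tm \in Delta R n by rewrite -eq pp_aff; apply: Delta_convex => //; rewrite l0 l1.
  have H1 := Ha tm stm Dm.
  have H2 := conv_use hc D1 D2 l0 l1.
  rewrite -pp_aff eq in H2.
  rewrite /tm dotpDr !dotpZr in H1.
  set A1 := h (pp y (t1 + s1 *: e)) - (h y + dotp a t1).
  set A2 := h (pp y (t2 + s2 *: e)) - (h y + dotp a t2).
  have H3 : 0 <= l * A1 + (1 - l) * A2.
    rewrite /A1 /A2.
    move: H1 H2; set u := h (pp y (l *: t1 + (1 - l) *: t2)); move=> H1 H2.
    have : h y = l * h y + (1 - l) * h y by ring.
    nra.
  have H4 : l * A1 + (1 - l) * A2 = (s2 * A1 - s1 * A2) / (s2 - s1).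
    by rewrite /l; field.
  have H5 : 0 <= s2 * A1 - s1 * A2.
    by move: H3; rewrite H4 => H3; have := mulr_ge0 H3 (ltW dp); rewrite divfK.
  rewrite /q -/A1 -/A2 -subr_le0.
  have -> : A1 / s1 - A2 / s2 = - ((s2 * A1 - s1 * A2) / (- (s1 * s2))).
    by field; rewrite (ltr0_neq0 s10) (lt0r_neq0 s20).
  rewrite oppr_le0; apply: divr_ge0 => //.
  have : 0 < s2 * (- s1) by apply: mulr_gt0; lra.
  lra.
pose L := [set r | exists t s, [/\ supp t, s < 0, pp y (t + s *: e) \in Delta R n & r = q t s]].
have supp0 : supp 0 by move=> j _; rewrite mxE.
have De : forall s, - y 0 kk <= s -> s <= 1 -> pp y (0 + s *: e) \in Delta R n.
  move=> s s0 s1; apply: pp_Delta => // i.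
  rewrite /pp add0r dotpZr.
  have -> : dotp (ones R n) e = 1 by rewrite dae onesE.
  rewrite mulr1 !mxE.
  have yi := ypos i; have yk := ypos kk.
  have [->|ik] := eqVneq i kk.
    rewrite ek; nra.
  rewrite ej // mulr0 addr0; nra.
have L0 : L !=set0.
  exists (q 0 (- y 0 kk)); exists 0, (- y 0 kk); split => //.
    by rewrite oppr_lt0.
  by apply: De => //; have := ypos kk; lra.
have ub : ubound L (q 0 1).
  move=> r [t [s [st s0 D ->]]]; apply: Key => //.
  by apply: De => //; have := ypos kk; lra.
have hs : has_sup L by split => //; exists (q 0 1).
pose c := sup L.
have cge : forall t s, supp t -> s < 0 -> pp y (t + s *: e) \in Delta R n -> q t s <= c.
  move=> t s st s0 D; apply: sup_upper_bound => //; by exists t, s; split.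
have cle : forall t s, supp t -> 0 < s -> pp y (t + s *: e) \in Delta R n -> c <= q t s.
  move=> t s st s0 D; apply: ge_sup => // r [t1 [s1 [st1 s1n D1 ->]]].
  exact: Key.
exists (a + (c - a 0 kk) *: e) => t st tD.
pose s := t 0 kk.
pose t' := t - s *: e.
have st' : supp t'.
  move=> j kj; rewrite !mxE.
  have [jk|jk] := eqVneq j kk.
    by rewrite jk ek /s mulr1 subrr.
  rewrite ej // mulr0 subr0; apply: st.
  have : val j != k by apply: contra jk => /eqP jk; apply/eqP/val_inj.
  by rewrite ltn_neqAle eq_sym => ->.
have tt : t = t' + s *: e by rewrite /t' subrK.
have da : dotp (a + (c - a 0 kk) *: e) t = dotp a t' + c * s.
  rewrite dotpDl dotpZl dea /t' dotpBr dotpZr dae -/s; ring.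
rewrite da.
suff : h y + (dotp a t' + c * s) <= h (pp y (t' + s *: e)) by rewrite -tt.
rewrite tt in tD.
case: (ltrgt0P s) => [s0|s0|s0].
- have := cle t' s st' s0 tD; rewrite /q ler_pdivlMr //; lra.
- have := cge t' s st' s0 tD; rewrite /q ler_ndivrMr //; lra.
- move: tD; rewrite s0 scale0r addr0 mulr0 addr0 => tD.
  by apply: Ha => // j kj; apply: st'; exact: ltnW.
Qed.

Lemma subgrad (R : realType) n (h : 'rV[R]_n -> R)
  (hc : convex_function (Delta R n) h) (y : 'rV[R]_n) (yD : y \in Delta R n)
  (ypos : forall i, 0 < y 0 i) :
  exists b, (forall z, z \in Delta R n -> dotp b z <= h z) /\ dotp b y = h y.
Proof.
have [a Ha] := subgrad_ind hc yD ypos (leqnn n).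
exists (a + (h y - dotp a y) *: ones R n); split; last first.
  by rewrite dotpDl dotpZl dotp_ones //; ring.
move=> z zD; rewrite dotpDl dotpZl dotp_ones // mulr1.
have := Ha (z - y).
have -> : pp y (z - y) = z.
  by rewrite /pp dotpBr !dotp_ones // subrr scale0r subr0 addrC subrK.
rewrite dotpBr.
have -> : dotp a z + (h y - dotp a y) = h y + (dotp a z - dotp a y) by ring.
apply => // j; by rewrite leqNgt ltn_ord.
Qed.

Definition cent (R : realType) n : 'rV[R]_n := (n%:R)^-1 *: ones R n.

Lemma cent_pos (R : realType) n (hn : (0 < n)%N) i : 0 < cent R n 0 i.
Proof. by rewrite !mxE mulr1 invr_gt0 ltr0n. Qed.

Lemma cent_Delta (R : realType) n (hn : (0 < n)%N) : cent R n \in Delta R n.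
Proof.
rewrite inE; split; first by move=> i; exact/ltW/cent_pos.
rewrite (eq_bigr (fun _ => (n%:R)^-1)); last by move=> i _; rewrite !mxE mulr1.
rewrite sumr_const card_ord -[_ *+ n]mulr_natr mulVf //.
by rewrite pnatr_eq0 -lt0n.
Qed.

Lemma within_delta (R : realType) n (h : 'rV[R]_n -> R)
  (hcont : {within Delta R n, continuous h}) x (xD : x \in Delta R n) e (e0 : 0 < e) :
  exists2 d, 0 < d & forall z, z \in Delta R n -> `|x - z| < d -> `|h x - h z| < e.
Proof.
move/subspace_continuousP : hcont => /(_ x).
rewrite inE in xD => /(_ xD).
move/cvgrPdist_lt => /(_ e e0).
rewrite /within => /nbhs_ballP [d d0 Hd].
exists d => // z zD xz; apply: Hd; last by rewrite inE in zD.
by rewrite -ball_normE.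
Qed.

Lemma near_tight (R : realType) n (hn : (0 < n)%N) (h : 'rV[R]_n -> R)
  (hc : convex_function (Delta R n) h) (hcont : {within Delta R n, continuous h})
  x (xD : x \in Delta R n) e (e0 : 0 < e) :
  exists b, (forall z, z \in Delta R n -> dotp b z <= h z) /\ h x - e < dotp b x.
Proof.
have e4 : 0 < e / 4 by apply: divr_gt0 => //; lra.
have [d d0 Hd] := within_delta hcont xD e4.
set cc := cent R n.
have ccD : cc \in Delta R n by exact: cent_Delta.
set M1 := `|x - cc| + 1.
set M2 := `|h x - h cc| + 1.
have M10 : 0 < M1 by rewrite /M1; have := normr_ge0 (x - cc); lra.
have M20 : 0 < M2 by rewrite /M2; have := normr_ge0 (h x - h cc); lra.
set tau := Num.min (1 / 2) (Num.min (d / (2 * M1)) (e / (4 * M2))).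
have t0 : 0 < tau.
  rewrite /tau !lt_min; apply/and3P; split; apply: divr_gt0 => //; lra.
have t1 : tau <= 1 / 2 by rewrite /tau ge_min lexx.
have t2 : tau <= d / (2 * M1) by rewrite /tau !ge_min lexx orbT.
have t3 : tau <= e / (4 * M2) by rewrite /tau !ge_min lexx !orbT.
set y := tau *: cc + (1 - tau) *: x.
have yD : y \in Delta R n by apply: Delta_convex => //; rewrite (ltW t0) /=; lra.
have ypos : forall i, 0 < y 0 i.
  move=> i; rewrite !mxE; apply: ltr_pwDl.
    by apply: mulr_gt0 => //; have := @cent_pos R n hn i; rewrite /cent !mxE.
  by apply: mulr_ge0; [lra | move: xD; rewrite inE => -[]].
have xy : x - y = tau *: (x - cc).
  by apply/rowP => i; rewrite !mxE; ring.
have dxy : `|x - y| < d.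
  rewrite xy normrZ ger0_norm; last exact: ltW.
  have h1 : `|x - cc| < M1 by rewrite /M1; lra.
  have h2 : tau * `|x - cc| <= tau * M1 by rewrite ler_wpM2l // ?ltW //; lra.
  have h3 : tau * M1 <= d / 2.
    by move: t2; rewrite ler_pdivlMr ?mulr_gt0 // => H; rewrite ler_pdivlMr //; nra.
  have : tau * M1 < d.
    apply: (le_lt_trans h3); lra.
  lra.
have hxy := Hd y yD dxy.
have [b [Hb Hby]] := subgrad hc yD ypos.
exists b; split => //.
have lin : dotp b y = tau * dotp b cc + (1 - tau) * dotp b x.
  by rewrite /y dotpDr !dotpZr.
have bcc := Hb cc ccD.
have f1 : tau * M2 <= e / 4.
  by move: t3; rewrite ler_pdivlMr ?mulr_gt0 // => H; rewrite ler_pdivlMr //; nra.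
have f2 : - `|h x - h cc| <= h x - h cc by rewrite lerNl; have := ler_norm (h cc - h x); rewrite distrC; lra.
have f3 : tau * (- `|h x - h cc|) <= tau * (h x - h cc) by rewrite ler_wpM2l // ltW.
have f4 : tau * `|h x - h cc| <= tau * M2 by rewrite ler_wpM2l ?ltW // /M2; lra.
have f5 : tau * dotp b cc <= tau * h cc by rewrite ler_wpM2l // ltW.
have f6 : - (e / 4) < h y - h x by move: hxy; rewrite ltr_norml; lra.
have pos : 0 < 1 - tau by lra.
suff : (1 - tau) * (h x - e) < (1 - tau) * dotp b x by rewrite ltr_pM2l.
have : (1 - tau) * dotp b x = h y - tau * dotp b cc by rewrite -Hby lin; ring.
move=> ->.
have f7 : tau * e <= e / 2 by nra.
nra.
Qed.

Lemma approx (R : realType) n (hn : (0 < n)%N) (h : 'rV[R]_n -> R)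
  (hc : convex_function (Delta R n) h) (hcont : {within Delta R n, continuous h})
  e (e0 : 0 < e) :
  exists A : seq 'rV[R]_n, A != [::] /\
    forall z, z \in Delta R n -> vA A z <= h z /\ h z < vA A z + e.
Proof.
have e2 : 0 < e / 2 by apply: divr_gt0 => //; lra.
have H : forall x : 'rV[R]_n, exists b : 'rV[R]_n, x \in Delta R n ->
    (forall z, z \in Delta R n -> dotp b z <= h z) /\ h x - e / 2 < dotp b x.
  move=> x; have [xD|xD] := boolP (x \in Delta R n).
    by have [b Hb] := near_tight hn hc hcont xD e2; exists b.
  by exists 0.
have [B HB] := choice H.
have H2 : forall x : 'rV[R]_n, exists V : set 'rV[R]_n, open V /\
    V `&` Delta R n = [set z | h z - dotp (B x) z < e / 2] `&` Delta R n.
  move=> x.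
  have cf : {within Delta R n, continuous (fun z => h z - dotp (B x) z)}.
    apply: within_continuousB => //; apply: continuous_subspaceT; exact: dotp_cont.
  move/continuousP : cf => /(_ _ (@open_lt _ (e / 2))) /open_subspaceP [V oV VD].
  by exists V; split.
have [Op HO] := choice H2.
have cov : Delta R n `<=` cover (Delta R n) Op.
  move=> z zD; exists z => //.
  have : ([set w | h w - dotp (B z) w < e / 2] `&` Delta R n) z.
    split => //=; have [_] := HB z (mem_set zD); lra.
  by rewrite -(proj2 (HO z)) => -[].
have := @Delta_compact R n; rewrite compact_cover => /(_ _ (Delta R n) Op).
move=> /(_ (fun x _ => proj1 (HO x)) cov) [D' D'D Dcov].
exists [seq B x | x <- enum_fset D'].
have mB : forall x : 'rV[R]_n, x \in D' -> forall z, z \in Delta R n -> dotp (B x) z <= h z.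
  move=> x xD' z zD; have [H3 _] := HB x (D'D _ xD').
  exact: H3.
have e0D : (delta_mx 0 (Ordinal hn) : 'rV[R]_n) \in Delta R n.
  rewrite inE; split; first by move=> i; rewrite mxE; case: (_ && _).
  have := dotp_deltal (ones R n) (Ordinal hn); rewrite onesE /dotp => <-.
  by apply: eq_bigr => i _; rewrite onesE mulr1.
have A0 : [seq B x | x <- enum_fset D'] != [::].
  have [x xD' _] := Dcov _ (set_mem e0D).
  have : x \in enum_fset D' by exact: xD'.
  by case: (enum_fset D').
split => // z zD; split.
  apply: vA_le => // b /mapP [x xD' ->]; exact: mB.
have [x xD' Ox] := Dcov _ (set_mem zD).
have : (Op x `&` Delta R n) z by split => //; exact: set_mem.
rewrite (proj2 (HO x)) => -[/= hz _].
have : dotp (B x) z <= vA [seq B x | x <- enum_fset D'] z by apply: vA_ge; exact: map_f.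
lra.
Qed.

Lemma integ_bnd (R : realType) n (S : set (Borel R n)) (mS : measurable S)
  (SD : S `<=` Delta R n) (pi : probability (Borel R n) R) (f : 'rV[R]_n -> R) M :
  {within Delta R n, continuous f} ->
  (forall z, z \in Delta R n -> `|f z| <= M) ->
  pi.-integrable S (EFin \o (f : Borel R n -> R)).
Proof.
move=> fc fb; apply: measurable_bounded_integrable => //.
- by apply: (le_lt_trans (probability_le1 _ mS)); rewrite ltry.
- exact: MC.
exists M; split; first by rewrite num_real.
move=> M' MM' x Sx; apply: (le_trans (fb x _)); first exact/mem_set/SD.
exact: ltW.
Qed.

Lemma integ_cst (R : realType) n (S : set (Borel R n)) (mS : measurable S)
  (pi : probability (Borel R n) R) (piS : pi S = 1%E) (k : R) :
  (\int[pi]_(s in S) (k%:E) = k%:E)%E.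
Proof.
transitivity (k%:E * pi S)%E; first exact: integral_cst.
by rewrite piS mule1.
Qed.

Lemma integ_cst_cont (R : realType) n (k : R) : {within Delta R n, continuous (fun _ : 'rV[R]_n => k)}.
Proof. by apply: continuous_subspaceT => x; apply: cst_continuous. Qed.

Definition Ecl (R : realType) n (c : R) (S : set (Borel R n))
    (pi pi' : probability (Borel R n) R) : Prop :=
  forall A alpha, firm A alpha -> excludes c S A alpha pi' -> excludes c S A alpha pi.

Lemma fB_le (R : realType) n (S : set (Borel R n)) (mS : measurable S)
  (SD : S `<=` Delta R n) (c : R) (hc : 0 < c)
  (pi pi' : probability (Borel R n) R) (E : Ecl c S pi pi')
  (B : seq 'rV[R]_n) (B0 : B != [::]) :
  (\int[pi]_(s in S) (Num.max (vA B s) 0)%:E <= \int[pi']_(s in S) (Num.max (vA B s) 0)%:E)%E.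
Proof.
pose F := fun s => Num.max (vA B s) 0.
have FE : F = vA (0 :: B) by apply: funext => s; exact: vA_cons0.
have Fc : {within Delta R n, continuous F}.
  by rewrite FE; apply: continuous_subspaceT; exact: vA_cont.
have Fb : forall z, z \in Delta R n -> `|F z| <= Cst (0 :: B).
  by move=> z zD; rewrite FE; exact: vA_bnd.
have iF := integ_bnd mS SD pi Fc Fb.
have iF' := integ_bnd mS SD pi' Fc Fb.
have F0 : forall s, 0 <= F s by move=> s; rewrite /F le_max lexx orbT.
have fI := integrable_fin_num mS iF.
have fI' := integrable_fin_num mS iF'.
change (\int[pi]_(s in S) (EFin \o F) s <= \int[pi']_(s in S) (EFin \o F) s)%E.
rewrite -(fineK fI) -(fineK fI') lee_fin.
set i := fine _; set i' := fine _.
have i0 : 0 <= i by apply: fine_ge0; apply: integral_ge0 => s _; rewrite lee_fin.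
have i0' : 0 <= i' by apply: fine_ge0; apply: integral_ge0 => s _; rewrite lee_fin.
rewrite leNgt; apply/negP => ii.
have sp : 0 < i + i' by lra.
pose t := 2 * c / (i + i').
have t0 : 0 < t by apply: divr_gt0 => //; lra.
pose B' := map (fun a => t *: a) B.
have B'0 : B' != [::] by rewrite /B' -size_eq0 size_map size_eq0.
have eqF : forall s, Num.max (vA B' s) 0 = t * F s.
  by move=> s; rewrite /B' vA_scale // /F maxr_pMr ?ltW // mulr0.
have intE : forall P : probability (Borel R n) R, P.-integrable S (EFin \o F) ->
    (\int[P]_(s in S) (Num.max (vA B' s) 0)%:E = t%:E * \int[P]_(s in S) (EFin \o F) s)%E.
  move=> P iP; rewrite -integralZl //; apply: eq_integral => s _.
  by rewrite eqF.
have firmB : firm B' 1 by split => //; rewrite ltr01 lexx.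
have ex' : excludes c S B' 1 pi'.
  rewrite /excludes mul1e intE // -(fineK fI') -/i' -EFinM lee_fin.
  rewrite /t mulrAC ler_pdivrMr //; nra.
have := E _ _ firmB ex'.
rewrite /excludes mul1e intE // -(fineK fI) -/i -EFinM lee_fin.
rewrite /t mulrAC ler_pdivrMr //; nra.
Qed.

Lemma vA_int_le (R : realType) n (S : set (Borel R n)) (mS : measurable S)
  (SD : S `<=` Delta R n) (c : R) (hc : 0 < c)
  (pi pi' : probability (Borel R n) R) (piS : pi S = 1%E) (pi'S : pi' S = 1%E)
  (E : Ecl c S pi pi') (A : seq 'rV[R]_n) (A0 : A != [::]) :
  (\int[pi]_(s in S) (vA A s)%:E <= \int[pi']_(s in S) (vA A s)%:E)%E.
Proof.
set K := Cst A.
pose B := map (fun a => a + K *: ones R n) A.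
have B0 : B != [::] by rewrite /B -size_eq0 size_map size_eq0.
have eqB : forall s, s \in S -> Num.max (vA B s) 0 = vA A s + K.
  move=> s; rewrite inE => Ss; have sD : s \in Delta R n by exact/mem_set/SD.
  rewrite /B vA_shift // dotp_ones // mulr1; apply/max_idPl.
  by have := vA_bnd A0 sD; rewrite ler_norml -/K; lra.
have Ac : {within Delta R n, continuous (vA A)}.
  by apply: continuous_subspaceT; exact: vA_cont.
have Ab : forall z, z \in Delta R n -> `|vA A z| <= Cst A by move=> z zD; exact: vA_bnd.
have Kb : forall z : 'rV[R]_n, z \in Delta R n -> `|(fun _ => K) z| <= `|K| by [].
have key : forall P : probability (Borel R n) R, P S = 1%E ->
   (\int[P]_(s in S) (Num.max (vA B s) 0)%:E = \int[P]_(s in S) (vA A s)%:E + K%:E)%E.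
  move=> P PS.
  have -> : (\int[P]_(s in S) (Num.max (vA B s) 0)%:E =
      \int[P]_(s in S) ((vA A s)%:E + K%:E))%E.
    by apply: eq_integral => s Ss; rewrite eqB.
  rewrite integralD //; first by rewrite (integ_cst mS PS).
  - exact: (integ_bnd mS SD P Ac Ab).
  - exact: (integ_bnd mS SD P (@integ_cst_cont R n K) Kb).
have := fB_le mS SD hc E B0.
by rewrite !key // leeD2rE.
Qed.

Lemma Ecl_Mrel (R : realType) n (hn : (0 < n)%N) (S : set (Borel R n)) (mS : measurable S)
  (SD : S `<=` Delta R n) (c : R) (hc : 0 < c)
  (pi pi' : probability (Borel R n) R) (piS : pi S = 1%E) (pi'S : pi' S = 1%E)
  (E : Ecl c S pi pi') : Mrel S pi' pi.
Proof.
move=> h hcv hct; apply/lee_addgt0Pr => e e0.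
have [A [A0 HA]] := approx hn hcv hct e0.
have Ac : {within Delta R n, continuous (vA A)}.
  by apply: continuous_subspaceT; exact: vA_cont.
have Ab : forall z, z \in Delta R n -> `|vA A z| <= Cst A by move=> z zD; exact: vA_bnd.
have Kb : forall z : 'rV[R]_n, z \in Delta R n -> `|(fun _ => e) z| <= `|e| by [].
have hb : forall z, z \in Delta R n -> `|h z| <= Cst A + e.
  move=> z zD; have [h1 h2] := HA z zD; have := Ab z zD; rewrite !ler_norml; lra.
have Ae : {within Delta R n, continuous (fun z => vA A z + e)}.
  apply: within_continuousD => //; exact: integ_cst_cont.
have Aeb : forall z, z \in Delta R n -> `|vA A z + e| <= Cst A + `|e|.
  move=> z zD; apply: (le_trans (ler_normD _ _)); rewrite lerD2r; exact: Ab.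
have iAe : forall P : probability (Borel R n) R, P S = 1%E ->
    (\int[P]_(s in S) (vA A s + e)%:E = \int[P]_(s in S) (vA A s)%:E + e%:E)%E.
  move=> P PS.
  have -> : (\int[P]_(s in S) (vA A s + e)%:E =
      \int[P]_(s in S) ((vA A s)%:E + e%:E))%E by [].
  rewrite integralD //; first by rewrite (integ_cst mS PS).
  - exact: (integ_bnd mS SD P Ac Ab).
  - exact: (integ_bnd mS SD P (@integ_cst_cont R n e) Kb).
apply: (@le_trans _ _ (\int[pi]_(s in S) (vA A s + e)%:E)%E).
  apply: le_integral => //.
  - exact: (integ_bnd mS SD pi hct hb).
  - exact: (integ_bnd mS SD pi Ae Aeb).
  - move=> s; rewrite inE => Ss; rewrite lee_fin.
    by have [_ /ltW] := HA s (mem_set (SD _ Ss)).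
rewrite iAe //.
apply: (@le_trans _ _ (\int[pi']_(s in S) (vA A s)%:E + e%:E)%E).
  by rewrite leeD2rE //; exact: (vA_int_le mS SD hc piS pi'S E A0).
rewrite leeD2rE //; apply: le_integral => //.
- exact: (integ_bnd mS SD pi' Ac Ab).
- exact: (integ_bnd mS SD pi' hct hb).
- move=> s; rewrite inE => Ss; rewrite lee_fin.
  by have [] := HA s (mem_set (SD _ Ss)).
Qed.

Local Open Scope convex_scope.

Lemma fA_convex (R : realType) n (A : seq 'rV[R]_n) (A0 : A != [::]) :
  convex_function (Delta R n) (fun s => Num.max (vA A s) 0).
Proof.
move=> t x y xD yD.
have -> : (x <| t |> y) = t%:num *: x + (1 - t%:num) *: y by [].
rewrite convRE !vA_cons0 //; apply: vA_conv => //.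
by apply/andP; split; [exact: ge0 | exact: le1].
Qed.

Local Close Scope convex_scope.

Lemma Mrel_Ecl (R : realType) n (S : set (Borel R n)) (c : R)
  (pi pi' : probability (Borel R n) R) : Mrel S pi' pi -> Ecl c S pi pi'.
Proof.
move=> M A alpha [A0 /andP[a0 a1]] ex'.
have hc := fA_convex A0.
have hct : {within Delta R n, continuous (fun s => Num.max (vA A s) 0)}.
  have -> : (fun s => Num.max (vA A s) 0) = vA (0 :: A).
    by apply: funext => s; exact: vA_cons0.
  by apply: continuous_subspaceT; exact: vA_cont.
have := M _ hc hct.
rewrite /excludes => H; apply: le_trans ex'.
by apply: lee_wpmul2l => //; rewrite lee_fin ltW.
Qed.

Lemma rhs_iff (R : realType) n (c : R) (S : set (Borel R n))
  (pi pi' : probability (Borel R n) R) :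
  (systematic c S pi pi' \/ no_discrimination c S pi pi') <-> Ecl c S pi pi'.
Proof.
split.
  case=> [[H _] //|[ns [ns' nu]]] A alpha fA ex'.
  have [//|nex] := pselect (excludes c S A alpha pi).
  exfalso; apply: ns'; split; last by exists A, alpha.
  move=> A' alpha' fA' ex.
  have [//|nex'] := pselect (excludes c S A' alpha' pi').
  exfalso; apply: nu; split.
    by exists A', alpha'.
  by exists A, alpha.
move=> E.
have [[A [alpha [fA [ex nex']]]]|nX] := pselect (exists A alpha, firm A alpha /\
    excludes c S A alpha pi /\ ~ excludes c S A alpha pi').
  by left; split => //; exists A, alpha.
right; split; [|split].
- by case=> _ X; apply: nX.
- by case=> _ [A [alpha [fA [ex' nex]]]]; apply: nex; exact: E.
- by case=> X _; apply: nX.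
Qed.

Unset Implicit Arguments.

Theorem lemma1 (R : realType) (n : nat) (hn : (0 < n)%N)
    (S : set (Borel R n)) (mS : measurable S) (SD : S `<=` Delta R n)
    (c : R) (hc : 0 < c)
    (pi pi' : probability (Borel R n) R)
    (piS : pi S = 1%E) (pi'S : pi' S = 1%E)
    (hp : forall i, skill S pi i = skill S pi' i) :
  Mrel S pi' pi <-> (systematic c S pi pi' \/ no_discrimination c S pi pi').
Proof.
rewrite rhs_iff; split.
  exact: Mrel_Ecl.
exact: (Ecl_Mrel hn mS SD hc piS pi'S).
Qed.
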